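(* Let $K\ge2$ and let $(\mathbf{H},D,\mathbf{Z})$ follow the replication csmGmm (r-csmGmm) described in the context. Let $\mathcal{H}^{rep}_a=\{(1,\dots,1)^T,(-1,\dots,-1)^T\}\subset\{-1,0,1\}^K$ and $\mathcal{H}^{rep}_0=\{-1,0,1\}^K\setminus\mathcal{H}^{rep}_a$, and define $$lfdr(\mathbf{z})=\Pr(\mathbf{H}\in\mathcal{H}^{rep}_0\mid\mathbf{Z}=\mathbf{z})=\frac{\sum_{l:\mathbf{h}^l\in\mathcal{H}^{rep}_0}\sum_{m=1}^{M_{b_l}}\pi_{b_l m}\prod_{k=1}^K\phi(z_k-h^l_k\mu_{b_l,m,k})}{\sum_{l=0}^{3^K-1}\sum_{m=1}^{M_{b_l}}\pi_{b_l m}\prod_{k=1}^K\phi(z_k-h^l_k\mu_{b_l,m,k})},$$ with $\phi$ the standard normal density. Then for any $k\in\{1,\dots,K\}$, with the other coordinates held fixed: $lfdr(\mathbf{z})$ is non-increasing in $z_k$ for $z_k>0$ provided $z_{k'}>0$ for all $k'$; and $lfdr(\mathbf{z})$ is non-decreasing in $z_k$ for $z_k<0$ provided $z_{k'}<0$ for all $k'$.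
   Context: The latent configuration is $\mathbf{H}\in\{-1,0,1\}^K$; enumerate the $3^K$ configurations as $\mathbf{h}^0,\dots,\mathbf{h}^{3^K-1}$ with $\mathbf{h}^0=(0,\dots,0)^T$, and let $b_l=\sum_{k=1}^K2^{K-k}|h^l_k|$ (the $k$-th binary digit of $b_l$ is $|h^l_k|$). csmGmm: for each $b\in\{0,\dots,2^K-1\}$ there is a positive integer $M_b$ ($M_0=1$), mean-magnitude vectors $\boldsymbol{\mu}_{b,m}=(\mu_{b,m,1},\dots,\mu_{b,m,K})^T$, $m=1,\dots,M_b$, with $\mu_{b,m,k}=0$ if the $k$-th binary digit of $b$ is $0$ and $\mu_{b,m,k}>0$ otherwise, and $\mu_{2^K-1,m,k}\ge\mu_{b,m',k}$ for all $b<2^K-1$ and all $m,m',k$; and probabilities $\Pr(\mathbf{H}=\mathbf{h}^l,D=m)=\pi_{b_l m}\ge0$ (shared across configurations with equal $b_l$) summing to one. Conditional on $\mathbf{H}=\mathbf{h}^l$, $D=m$, $\mathbf{Z}\sim N_K(\mathrm{diag}(\mathbf{h}^l)\boldsymbol{\mu}_{b_l,m},\mathbf{I}_K)$. The r-csmGmm is this model with the additional restriction $M_{2^K-1}=1$. The replication composite null for parameters $\theta_1,\dots,\theta_K$ is $\{\bigcup_k\theta_k=0\}\cup\{\bigcup_{k\ne k'}\mathrm{sign}(\theta_k)\ne\mathrm{sign}(\theta_{k'})\}$, corresponding to $\mathbf{H}\in\mathcal{H}^{rep}_0$. *)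

(* Defs.v *)
From HB Require Import structures.
From mathcomp Require Import all_boot all_order all_algebra.
From mathcomp Require Import all_classical all_reals all_analysis.
Set Implicit Arguments. Unset Strict Implicit. Unset Printing Implicit Defensive.
Import Order.TTheory GRing.Theory Num.Theory.
Local Open Scope ring_scope.

Definition phi (R : realType) (x : R) : R :=
  expR (- (x ^+ 2) / 2) / Num.sqrt (2 * pi).

(* A latent configuration h in {-1,0,1}^K is encoded as h : {ffun 'I_K -> 'I_3},
   with coordinate value hval h k = (h k) - 1, i.e. 0 |-> -1, 1 |-> 0, 2 |-> 1. *)
Definition config (K : nat) := {ffun 'I_K -> 'I_3}.

Definition hval (R : realType) (K : nat) (h : config K) (k : 'I_K) : R :=
  (nat_of_ord (h k))%:R - 1.

(* The pattern b_l, encoded as the set of coordinates k with |h_k| = 1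
   (the set of k whose binary digit of b_l is 1). *)
Definition supp (R : realType) (K : nat) (h : config K) : {set 'I_K} :=
  [set k | hval R h k != 0].

Definition in_Ha (R : realType) (K : nat) (h : config K) : bool :=
  [forall k, hval R h k == 1] || [forall k, hval R h k == -1].

(* csmGmm parameters: M b (number of mixture components for pattern b; components
   indexed by m = 0 .. M b - 1), mu b m k (mean magnitudes), pi b m (probabilities). *)
Definition csmGmm (R : realType) (K : nat) (M : {set 'I_K} -> nat)
    (mu : {set 'I_K} -> nat -> 'I_K -> R) (p : {set 'I_K} -> nat -> R) : Prop :=
  (forall b, (0 < M b)%N) /\
      M (finset.set0 : {set 'I_K}) = 1%N /\
      (forall b m k, (m < M b)%N -> (k \notin b -> mu b m k = 0)
                                     /\ (k \in b -> 0 < mu b m k)) /\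
      (forall b m m' k, b != [set: 'I_K] -> (m < M [set: 'I_K])%N -> (m' < M b)%N ->
                        mu b m' k <= mu [set: 'I_K] m k) /\
      (forall b m, (m < M b)%N -> 0 <= p b m)
    /\ \sum_(h : config K) \sum_(m < M (supp R h)) p (supp R h) m = 1.

Definition r_csmGmm (R : realType) (K : nat) (M : {set 'I_K} -> nat)
    (mu : {set 'I_K} -> nat -> 'I_K -> R) (p : {set 'I_K} -> nat -> R) : Prop :=
  csmGmm M mu p /\ M [set: 'I_K] = 1%N.

Definition dens_h (R : realType) (K : nat) (M : {set 'I_K} -> nat)
    (mu : {set 'I_K} -> nat -> 'I_K -> R) (p : {set 'I_K} -> nat -> R)
    (h : config K) (z : 'I_K -> R) : R :=
  \sum_(m < M (supp R h))
     p (supp R h) m * \prod_(k < K) phi (z k - hval R h k * mu (supp R h) m k).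

Definition lfdr (R : realType) (K : nat) (M : {set 'I_K} -> nat)
    (mu : {set 'I_K} -> nat -> 'I_K -> R) (p : {set 'I_K} -> nat -> R)
    (z : 'I_K -> R) : R :=
  (\sum_(h : config K | ~~ in_Ha R h) dens_h M mu p h z)
  / (\sum_(h : config K) dens_h M mu p h z).

(* Main.v *)
Require Import Defs.
From HB Require Import structures.
From mathcomp Require Import all_boot all_order all_algebra.
From mathcomp Require Import all_classical all_reals all_analysis.
From mathcomp Require Import ring lra.
Set Implicit Arguments. Unset Strict Implicit. Unset Printing Implicit Defensive.
Import Order.TTheory GRing.Theory Num.Theory.
Local Open Scope ring_scope.

Definition Cf (R : realType) (x : R) : R := expR x + expR (- x).

Lemma CN (R : realType) (x : R) : Cf (- x) = Cf x.
Proof. by rewrite /Cf opprK addrC. Qed.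

Lemma C_mono (R : realType) (a b : R) : `|a| <= b -> Cf a <= Cf b.
Proof.
wlog a0 : a / 0 <= a.
  move=> W H; case: (lerP 0 a) => Ha; first exact: W.
  rewrite -CN; apply: W; [lra | by rewrite normrN].
move=> H; rewrite ger0_norm // in H.
have E : expR (- a) - expR (- b) = expR (- a - b) * (expR b - expR a).
  by rewrite mulrBr -!expRD; congr (expR _ - expR _); ring.
have h1 : expR (- a - b) <= 1 by rewrite expR_le1; lra.
have h2 : expR a <= expR b by rewrite ler_expR.
rewrite /Cf.
have : expR (- a - b) * (expR b - expR a) <= expR b - expR a.
  by rewrite ler_piMl ?subr_ge0 //; apply: ltW; exact: expR_gt0.
nra.
Qed.

Lemma C_mul (R : realType) (a b : R) : Cf a * Cf b = Cf (a + b) + Cf (a - b).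
Proof.
rewrite /Cf mulrDl !mulrDr -!expRD.
have -> : - (a + b) = - a + - b by ring.
have -> : - (a - b) = - a + b by ring.
ring.
Qed.

Lemma core (R : realType) (u v u' v' : R) :
  `|u| <= v -> `|u' - u| <= v' - v -> Cf v * Cf u' <= Cf v' * Cf u.
Proof.
move=> /ler_normlP [h1 h2] /ler_normlP [h3 h4].
rewrite !C_mul; apply: lerD; apply: C_mono; apply/ler_normlP; split; lra.
Qed.

Lemma core2 (R : realType) (s u v u' v' : R) : (s = 1 \/ s = -1) ->
  `|s * u| <= s * v -> `|s * u' - s * u| <= s * v' - s * v ->
  Cf v * Cf u' <= Cf v' * Cf u.
Proof.
case=> -> h1 h2; first by move: h1 h2; rewrite !mul1r; apply: core.
rewrite -(CN v) -(CN u') -(CN v') -(CN u).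
by apply: core; move: h1 h2; rewrite !mulN1r.
Qed.

Lemma rearr (R : realType) (a b c d e f g : R) : 0 <= a -> 0 <= b -> 0 <= c ->
  d * e <= f * g -> a * (c * d) * (b * e) <= b * (c * f) * (a * g).
Proof.
move=> ha hb hc h.
have -> : a * (c * d) * (b * e) = (a * b * c) * (d * e) by ring.
have -> : b * (c * f) * (a * g) = (a * b * c) * (f * g) by ring.
by apply: ler_wpM2l => //; rewrite !mulr_ge0.
Qed.

Lemma phi_gt0 (R : realType) (x : R) : 0 < phi x.
Proof. by rewrite /phi divr_gt0 ?expR_gt0 // sqrtr_gt0 mulr_gt0 // pi_gt0. Qed.

Lemma phi_shift (R : realType) (x c : R) :
  phi (x - c) = phi x * expR (x * c) * expR (- (c ^+ 2) / 2).
Proof.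
rewrite /phi.
have -> : - ((x - c) ^+ 2) / 2 = - (x ^+ 2) / 2 + x * c + - (c ^+ 2) / 2 by field.
rewrite !expRD; field.
by rewrite lt0r_neq0 // sqrtr_gt0 mulr_gt0 // pi_gt0.
Qed.

Definition cc (R : realType) K (mu : {set 'I_K} -> nat -> 'I_K -> R)
  (h : config K) (m : nat) (k : 'I_K) : R := hval R h k * mu (supp R h) m k.
Definition Gz (R : realType) K (z : 'I_K -> R) : R := \prod_(k < K) phi (z k).
Definition Wt (R : realType) K (mu : {set 'I_K} -> nat -> 'I_K -> R)
  (h : config K) (m : nat) : R := \prod_(k < K) expR (- (cc mu h m k ^+ 2) / 2).
Definition lin (R : realType) K (z c : 'I_K -> R) : R := \sum_(k < K) z k * c k.

Lemma dens_eq (R : realType) K M (mu : {set 'I_K} -> nat -> 'I_K -> R) p h z :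
  dens_h M mu p h z = Gz z * \sum_(m < M (supp R h))
      p (supp R h) m * Wt mu h m * expR (lin z (cc mu h m)).
Proof.
rewrite /dens_h mulr_sumr; apply: eq_bigr => m _.
under eq_bigr => k _ do rewrite phi_shift.
rewrite big_split big_split /= /lin expR_sum /Gz /Wt /cc; ring.
Qed.

Definition negc K (h : config K) : config K := [ffun k => rev_ord (h k)].

Lemma negcK K : involutive (@negc K).
Proof. by move=> h; apply/ffunP => k; rewrite !ffunE rev_ordK. Qed.

Lemma hval_cases (R : realType) K (h : config K) k :
  [\/ hval R h k = -1, hval R h k = 0 | hval R h k = 1].
Proof.
rewrite /hval; case: (h k) => [[|[|[|n]]] Hn] //=.
- by apply: Or31; ring.
- by apply: Or32; ring.
- by apply: Or33; ring.
Qed.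

Lemma hval_neg (R : realType) K (h : config K) k : hval R (negc h) k = - hval R h k.
Proof.
rewrite /hval ffunE /=; case: (h k) => [[|[|[|n]]] Hn] //=.
- by rewrite (_ : (3 - 1)%N = 2%N) //; ring.
- by rewrite (_ : (3 - 2)%N = 1%N) //; ring.
- by rewrite (_ : (3 - 3)%N = 0%N) //; ring.
Qed.

Lemma supp_neg (R : realType) K (h : config K) : supp R (negc h) = supp R h.
Proof. by apply/setP => k; rewrite !inE hval_neg oppr_eq0. Qed.

Lemma cc_neg (R : realType) K (mu : {set 'I_K} -> nat -> 'I_K -> R) h m k :
  cc mu (negc h) m k = - cc mu h m k.
Proof. by rewrite /cc supp_neg hval_neg mulNr. Qed.

Lemma Wt_neg (R : realType) K (mu : {set 'I_K} -> nat -> 'I_K -> R) h m :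
  Wt mu (negc h) m = Wt mu h m.
Proof. by rewrite /Wt; apply: eq_bigr => k _; rewrite cc_neg sqrrN. Qed.

Lemma in_Ha_neg (R : realType) K (h : config K) : in_Ha R (negc h) = in_Ha R h.
Proof.
rewrite /in_Ha orbC; congr (_ || _); apply: eq_forallb => k;
  by rewrite hval_neg eqr_oppLR ?opprK.
Qed.

Definition Qh (R : realType) K M (mu : {set 'I_K} -> nat -> 'I_K -> R) p h z :=
  dens_h M mu p h z + dens_h M mu p (negc h) z.

Lemma Q_eq (R : realType) K M (mu : {set 'I_K} -> nat -> 'I_K -> R) p h z :
  Qh M mu p h z = Gz z * \sum_(m < M (supp R h))
      p (supp R h) m * Wt mu h m * Cf (lin z (cc mu h m)).
Proof.
rewrite /Qh !dens_eq supp_neg -mulrDr -big_split; congr (_ * _).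
apply: eq_bigr => m _; rewrite Wt_neg /Cf mulrDr; congr (_ + _ * expR _).
by rewrite /lin -sumrN; apply: eq_bigr => k _; rewrite cc_neg mulrN.
Qed.

Lemma sumQ (R : realType) K M (mu : {set 'I_K} -> nat -> 'I_K -> R) p z
   (P : pred (config K)) : (forall h, P (negc h) = P h) ->
  \sum_(h | P h) Qh M mu p h z = 2 * \sum_(h | P h) dens_h M mu p h z.
Proof.
move=> HP; rewrite /Qh big_split /=.
have -> : \sum_(h | P h) dens_h M mu p (negc h) z = \sum_(h | P h) dens_h M mu p h z.
  rewrite [RHS](reindex_inj (can_inj (@negcK K))) /=.
  by apply: eq_bigl => h; rewrite HP.
by rewrite mulr_natl mulr2n.
Qed.

Lemma lin_bound (R : realType) K (a c m : 'I_K -> R) :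
  (forall k, 0 <= a k) -> (forall k, `|c k| <= m k) -> `|lin a c| <= lin a m.
Proof.
move=> ha hc; apply: le_trans (ler_norm_sum _ _ _) _.
apply: ler_sum => k _; rewrite normrM ger0_norm //; exact: ler_wpM2l.
Qed.

Lemma lin_scale (R : realType) K (s : R) (z c : 'I_K -> R) :
  s * lin z c = lin (fun k => s * z k) c.
Proof. by rewrite /lin mulr_sumr; apply: eq_bigr => k _; rewrite mulrA. Qed.

Lemma lin_diff (R : realType) K (s : R) (z z' c : 'I_K -> R) :
  s * lin z' c - s * lin z c = lin (fun k => s * z' k - s * z k) c.
Proof. by rewrite !lin_scale /lin -sumrB; apply: eq_bigr => k _; rewrite mulrBl. Qed.

Lemma supp_Ha (R : realType) K (h : config K) : in_Ha R h -> supp R h = [set: 'I_K].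
Proof.
move=> Hh; apply/setP => k; rewrite !inE.
by case/orP: Hh => /forallP/(_ k)/eqP ->; rewrite ?oppr_eq0 oner_eq0.
Qed.

Lemma cc_bound (R : realType) K M (mu : {set 'I_K} -> nat -> 'I_K -> R) p g m k :
  csmGmm M mu p -> M [set: 'I_K] = 1%N -> (m < M (supp R g))%N ->
  `|cc mu g m k| <= mu [set: 'I_K] 0%N k.
Proof.
move=> [HM0 [_ [Hmu [Hle _]]]] HT Hm.
have mu0 : 0 < mu [set: 'I_K] 0%N k.
  by apply: (proj2 (Hmu _ _ _ _)); rewrite ?inE // HT.
rewrite /cc.
have [H|H|H] := hval_cases R g k; rewrite H.
2: by rewrite mul0r normr0 ltW.
all: have ks : k \in supp R g by rewrite inE H ?oppr_eq0 oner_eq0.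
all: have nu0 := proj2 (Hmu _ _ k Hm) ks.
all: rewrite ?mulN1r ?normrN ?mul1r gtr0_norm //.
all: case: (eqVneq (supp R g) [set: 'I_K]) => Hs.
all: try (move: Hm nu0; rewrite Hs HT ltnS leqn0 => /eqP -> _; exact: lexx).
all: by apply: Hle => //; rewrite HT.
Qed.

Lemma Wt_gt0 (R : realType) K (mu : {set 'I_K} -> nat -> 'I_K -> R) h m : 0 < Wt mu h m.
Proof. by apply: prodr_gt0 => k _; exact: expR_gt0. Qed.

Lemma Gz_gt0 (R : realType) K (z : 'I_K -> R) : 0 < Gz z.
Proof. by apply: prodr_gt0 => k _; exact: phi_gt0. Qed.

Lemma Q_Ha (R : realType) K M (mu : {set 'I_K} -> nat -> 'I_K -> R) p h z :
  in_Ha R h -> M [set: 'I_K] = 1%N ->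
  Qh M mu p h z = Gz z * (p [set: 'I_K] 0%N * Wt mu h 0 *
                          Cf (lin z (mu [set: 'I_K] 0%N))).
Proof.
move=> Hh HT; rewrite Q_eq.
have Hs := supp_Ha Hh.
have Ec : Cf (lin z (cc mu h 0)) = Cf (lin z (mu [set: 'I_K] 0%N)).
  rewrite /lin /cc Hs; case/orP: Hh => /forallP H.
    by congr Cf; apply: eq_bigr => k _; rewrite (eqP (H k)) mul1r.
  rewrite -CN -sumrN; congr Cf; apply: eq_bigr => k _.
  by rewrite (eqP (H k)) mulN1r mulrN opprK.
rewrite -Ec; move: (Wt mu h) (fun m => Cf (lin z (cc mu h m))) => W C.
by rewrite Hs HT big_ord1.
Qed.

Lemma dens_ge0 (R : realType) K M (mu : {set 'I_K} -> nat -> 'I_K -> R) p h z :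
  csmGmm M mu p -> 0 <= dens_h M mu p h z.
Proof.
move=> [_ [_ [_ [_ [Hp _]]]]]; apply: sumr_ge0 => m _.
by apply: mulr_ge0; [exact: Hp | apply: prodr_ge0 => k _; apply/ltW; exact: phi_gt0].
Qed.

Lemma T_gt0 (R : realType) K M (mu : {set 'I_K} -> nat -> 'I_K -> R) p z :
  csmGmm M mu p -> 0 < \sum_(h : config K) dens_h M mu p h z.
Proof.
move=> Hc; rewrite lt_def sumr_ge0 ?andbT; last by move=> h _; exact: dens_ge0.
apply/eqP => H0.
have H1 := psumr_eq0P (fun h _ => @dens_ge0 R K M mu p h z Hc) H0.
move: Hc => [_ [_ [_ [_ [Hp Hsum]]]]].
move: Hsum; rewrite big1 => [/eqP|h _]; first by rewrite eq_sym oner_eq0.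
have H2 : forall m : 'I_(M (supp R h)), true ->
    p (supp R h) m * \prod_(k < K) phi (z k - hval R h k * mu (supp R h) m k) = 0.
  apply: psumr_eq0P; last exact: (H1 h isT).
  move=> m _; apply: mulr_ge0; first exact: Hp.
  by apply: prodr_ge0 => k _; apply/ltW; exact: phi_gt0.
apply: big1 => m _; have := H2 m isT; move/eqP; rewrite mulf_eq0 => /orP [/eqP //|].
by rewrite gt_eqF //; apply: prodr_gt0 => k _; exact: phi_gt0.
Qed.

Lemma cross (R : realType) K M (mu : {set 'I_K} -> nat -> 'I_K -> R) p (s : R) z z' :
  csmGmm M mu p -> M [set: 'I_K] = 1%N -> (s = 1 \/ s = -1) ->
  (forall j, 0 <= s * z j) -> (forall j, s * z j <= s * z' j) ->
  (\sum_(h | in_Ha R h) dens_h M mu p h z) * (\sum_(h : config K) dens_h M mu p h z')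
  <= (\sum_(h | in_Ha R h) dens_h M mu p h z') * (\sum_(h : config K) dens_h M mu p h z).
Proof.
move=> Hc HT Hs H0 H1.
have SA w : \sum_(h | in_Ha R h) Qh M mu p h w = 2 * \sum_(h | in_Ha R h) dens_h M mu p h w
  := sumQ M mu p w (@in_Ha_neg R K).
have ST w : \sum_(h | true) Qh M mu p h w = 2 * \sum_(h | true) dens_h M mu p h w
  := sumQ M mu p w (P := fun _ => true) (fun _ => erefl).
suff : (2 * \sum_(h | in_Ha R h) dens_h M mu p h z) * (2 * \sum_(h : config K) dens_h M mu p h z')
  <= (2 * \sum_(h | in_Ha R h) dens_h M mu p h z') * (2 * \sum_(h : config K) dens_h M mu p h z).
  by nra.
rewrite -!SA -!ST !mulr_suml; apply: ler_sum => h Hh; rewrite !mulr_sumr.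
apply: ler_sum => g _.
have Hp := proj1 (proj2 (proj2 (proj2 (proj2 Hc)))).
rewrite [Qh _ _ _ h z]Q_Ha // [Qh _ _ _ h z']Q_Ha // !Q_eq; apply: rearr; try (apply/ltW; exact: Gz_gt0).
  by apply: mulr_ge0; [apply: Hp; rewrite HT | apply/ltW; exact: Wt_gt0].
rewrite !mulr_sumr; apply: ler_sum => m _.
rewrite mulrCA [Cf (lin z' _) * _]mulrCA; apply: ler_wpM2l.
  by apply: mulr_ge0; [apply: Hp | apply/ltW; exact: Wt_gt0].
have Hb k : `|cc mu g m k| <= mu [set: 'I_K] 0%N k := @cc_bound R K M mu p g m k Hc HT (ltn_ord m).
apply: (core2 Hs).
  by rewrite !lin_scale; apply: lin_bound.
rewrite !lin_diff; apply: lin_bound => // j; rewrite subr_ge0; exact: H1.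
Qed.

Lemma lfdr_mono (R : realType) K M (mu : {set 'I_K} -> nat -> 'I_K -> R) p (s : R) z z' :
  csmGmm M mu p -> M [set: 'I_K] = 1%N -> (s = 1 \/ s = -1) ->
  (forall j, 0 <= s * z j) -> (forall j, s * z j <= s * z' j) ->
  lfdr M mu p z' <= lfdr M mu p z.
Proof.
move=> Hc HT Hs H0 H1.
have Hx := cross Hc HT Hs H0 H1.
have Pz := @T_gt0 R K M mu p z Hc; have Pz' := @T_gt0 R K M mu p z' Hc.
rewrite /lfdr ler_pdivrMr // mulrAC ler_pdivlMr //.
move: Hx Pz Pz'.
have Sp w : \sum_(h : config K) dens_h M mu p h w =
   \sum_(h | in_Ha R h) dens_h M mu p h w + \sum_(h | ~~ in_Ha R h) dens_h M mu p h w.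
  exact: bigID.
rewrite !Sp; nra.
Qed.

Theorem theorem3 (R : realType) (K : nat) (M : {set 'I_K} -> nat)
    (mu : {set 'I_K} -> nat -> 'I_K -> R) (p : {set 'I_K} -> nat -> R) :
  (2 <= K)%N ->
  r_csmGmm M mu p ->
  forall k : 'I_K,
    (forall z z' : 'I_K -> R,
       (forall j, j != k -> z' j = z j) ->
       (forall j, 0 < z j) -> z k <= z' k ->
       lfdr M mu p z' <= lfdr M mu p z)
    /\
    (forall z z' : 'I_K -> R,
       (forall j, j != k -> z' j = z j) ->
       (forall j, z j < 0) -> z' k <= z k ->
       lfdr M mu p z' <= lfdr M mu p z).
Proof.
move=> _ [Hc HT] k; split => z z' Hj Hz Hk.
- apply: (lfdr_mono (s := 1)) => //; [by left | |] => j; rewrite !mul1r.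
    exact: ltW.
  by case: (eqVneq j k) => [->|/Hj ->].
- apply: (lfdr_mono (s := -1)) => //; [by right | |] => j; rewrite !mulN1r.
    by rewrite oppr_ge0 ltW.
  by case: (eqVneq j k) => [->|/Hj ->]; rewrite ?lerN2.
Qed.
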